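(* Let $\pi$ be a topological group, $k$ a finite field and $F$ a field. For $i=1,\dots,N$, let $\rho_i:\pi\to\mathrm{GL}(V_i)$ be a finite-dimensional representation over $k$ with finite monodromy group $G_i=\rho_i(\pi)\le\mathrm{GL}(V_i)$, and let $\eta_i:G_i\to\mathrm{GL}(W_i)$ be a nontrivial representation over $F$. Let $\rho=\bigoplus_{i=1}^N(\eta_i\circ\rho_i):\pi\to\prod_{i=1}^N\mathrm{GL}(W_i)$ and $G=\rho(\pi)$. Assume: (1) each $G_i$ is quasisimple, i.e. $G_i$ is perfect and $G_i'=G_i/Z(G_i)$ is simple; (2) for every $i\ne j$, the pair $(G_l'\to\mathrm{PGL}(V_l))_{l=i,j}$ is Goursat-adapted; (3) for every $i\neq j$ there is no isomorphism $\rho_i\cong\chi\otimes\sigma(\rho_j)$ or $\rho_i\cong\chi\otimes D(\sigma(\rho_j))$ with $\chi$ a one-dimensional representation of $\pi$ over $k$ and $\sigma\in\mathrm{Aut}(k)$. Then $G=\prod_{i=1}^N(G_i/\ker\eta_i)$ (i.e. $G$ is as large as possible inside $\prod_i\eta_i(G_i)$).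
   Context: A pair $(G_i\to\mathrm{PGL}(V_i))_{i=1,2}$ of faithful representations over a finite field $k$ is Goursat-adapted if every isomorphism $G_1\cong G_2$ is of the form $X\mapsto A\sigma(X)A^{-1}$ for an isomorphism $A:V_1\to V_2$, or $X\mapsto A\sigma(X)^{-t}A^{-1}$ for an isomorphism $A:V_1^*\to V_2$, with $\sigma\in\mathrm{Aut}(k)$ acting on matrix entries. $G_l'$ is regarded in $\mathrm{PGL}(V_l)$ via the natural map. $\sigma(\rho_j)=\sigma\circ\rho_j$, and $D(\cdot)$ denotes the dual (contragredient) representation. *)

(* Defs.v *)
From HB Require Import structures.
From mathcomp Require Import all_boot all_order all_algebra all_fingroup all_solvable all_field all_character.
From mathcomp Require Import boolp.
Set Implicit Arguments.
Unset Strict Implicit.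
Unset Printing Implicit Defensive.
Import GRing.Theory.

Local Open Scope ring_scope.

(* The group GL(V) for V = k^(n.+1) (row vectors); dimensions are n.+1 > 0. *)
Notation GLk k n := {'GL_n.+1[k]}.

Definition img_set (pi : Type) (k : finFieldType) (n : nat)
    (rho : pi -> GLk k n) : {set GLk k n} :=
  [set g | `[< exists p, rho p = g >]].

(* The central subgroup of scalar matrices in GL(V); PGL(V) = GL(V)/Scal. *)
Definition Scal (k : finFieldType) (n : nat) : {set GLk k n} :=
  [set g | is_scalar_mx (GLval g)].

Definition quasisimple (gT : finGroupType) (G : {group gT}) : Prop :=
  ([~: G, G] = G)%g /\ simple (G / 'Z(G))%g.

(* The natural map G' = G/Z(G) -> PGL(V) is a well-defined faithful
   representation, i.e. Z(G) is exactly the set of scalar elements of G. *)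
Definition natural_proj_faithful (k : finFieldType) (n : nat)
    (G : {group GLk k n}) : Prop :=
  ('Z(G) = G :&: Scal k n)%g.

Definition field_aut (k : finFieldType) (s : {rmorphism k -> k}) : Prop :=
  bijective s.

(* Goursat-adapted pair, for the images G1/Scal <= PGL(V1), G2/Scal <= PGL(V2)
   (images of G'_l under the natural maps).  Matrices act on row vectors;
   A : 'M_(n1,n2) with two-sided inverse B : 'M_(n2,n1) is an isomorphism
   V1 -> V2 (resp. V1^* -> V2), and X |-> B sigma(X) A is conjugation by it. *)
Definition goursat_adapted (k : finFieldType) (n1 n2 : nat)
    (G1 : {group GLk k n1}) (G2 : {group GLk k n2}) : Prop :=
  forall f : {morphism (G1 / Scal k n1)%g >-> coset_of (Scal k n2)},
    isom (G1 / Scal k n1)%g (G2 / Scal k n2)%g f ->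
    exists s : {rmorphism k -> k}, field_aut s /\
    exists (A : 'M[k]_(n1.+1, n2.+1)) (B : 'M[k]_(n2.+1, n1.+1)),
      (A *m B = 1%:M /\ B *m A = 1%:M) /\
      ((forall g, g \in G1 -> exists h : GLk k n2,
          GLval h = B *m map_mx s (GLval g) *m A /\
          f (coset (Scal k n1) g) = coset (Scal k n2) h)
       \/
       (forall g, g \in G1 -> exists h : GLk k n2,
          GLval h = B *m (invmx (map_mx s (GLval g)))^T *m A /\
          f (coset (Scal k n1) g) = coset (Scal k n2) h)).

Definition one_dim_rep (pi : groupType) (k : finFieldType) (chi : pi -> k) : Prop :=
  chi 1%g = 1 /\ forall p q : pi, chi (p * q)%g = chi p * chi q.

Definition iso_twist (pi : groupType) (k : finFieldType) (ni nj : nat)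
    (rhoi : pi -> GLk k ni) (rhoj : pi -> GLk k nj) (chi : pi -> k)
    (s : {rmorphism k -> k}) : Prop :=
  exists (A : 'M[k]_(nj.+1, ni.+1)) (B : 'M[k]_(ni.+1, nj.+1)),
    (A *m B = 1%:M /\ B *m A = 1%:M) /\
    forall p, GLval (rhoi p) = chi p *: (B *m map_mx s (GLval (rhoj p)) *m A).

Definition iso_twist_dual (pi : groupType) (k : finFieldType) (ni nj : nat)
    (rhoi : pi -> GLk k ni) (rhoj : pi -> GLk k nj) (chi : pi -> k)
    (s : {rmorphism k -> k}) : Prop :=
  exists (A : 'M[k]_(nj.+1, ni.+1)) (B : 'M[k]_(ni.+1, nj.+1)),
    (A *m B = 1%:M /\ B *m A = 1%:M) /\
    forall p, GLval (rhoi p) =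
      chi p *: (B *m (invmx (map_mx s (GLval (rhoj p))))^T *m A).

(* Main.v *)
Require Import Defs.
From HB Require Import structures.
From mathcomp Require Import all_boot all_order all_algebra all_fingroup all_solvable all_field all_character.
From mathcomp Require Import boolp.
Import GRing.Theory.
Set Implicit Arguments.
Unset Strict Implicit.
Local Open Scope ring_scope.
Local Open Scope group_scope.

Lemma qs_normal (gT : finGroupType) (G K : {group gT}) :
  quasisimple G -> K <| G -> K \subset 'Z(G) \/ G \subset K.
Proof.
move=> [perf simp] nKG.
have nZG : G \subset 'N('Z(G)) := normal_norm (center_normal G).
have sKG := normal_sub nKG.
have nZK : K \subset 'N('Z(G)) := subset_trans sKG nZG.
case/simpleP: simp => _ /(_ (K / 'Z(G))%G (quotient_normal _ nKG)) [] H.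
- by left; rewrite -quotient_sub1 // H.
- right; have sGZK : G \subset 'Z(G) * K by rewrite -quotientSK // H.
  rewrite -{1}perf /commutator gen_subG; apply/subsetP => c /imset2P [a b Ga Gb ->].
  case/mulsgP: (subsetP sGZK a Ga) => za ka Za Ka ->.
  case/mulsgP: (subsetP sGZK b Gb) => zb kb Zb Kb ->.
  have cz : forall z y, z \in 'Z(G) -> y \in G -> [~ z, y] = 1.
    by move=> z y /centerP [_ cz] Gy; apply/eqP/commgP; apply: cz.
  have Gka : ka \in G by apply: (subsetP sKG).
  have Gkb : kb \in G by apply: (subsetP sKG).
  have Gzb : zb \in G by case/centerP: Zb.
  have Gzk : zb * kb \in G by rewrite groupM.
  rewrite commMgJ (cz za (zb * kb) Za Gzk) conj1g mul1g commgMJ.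
  have -> : [~ ka, zb] = 1 by apply/eqP; rewrite commg1_sym; apply/eqP/cz.
  by rewrite groupM ?groupR ?groupJ.
Qed.

Lemma ScalP (k : finFieldType) (n : nat) (x : GLk k n) :
  reflect (exists a, GLval x = a%:M) (x \in Scal k n).
Proof. by rewrite inE; apply: is_scalar_mxP. Qed.

Lemma Scal_group_set (k : finFieldType) (n : nat) : group_set (Scal k n).
Proof.
apply/group_setP; split; first by apply/ScalP; exists 1%R.
move=> x y /ScalP [a xa] /ScalP [b yb]; apply/ScalP; exists (a * b)%R.
by rewrite GL_MxE xa yb -scalar_mxM.
Qed.
Canonical Scal_group (k : finFieldType) (n : nat) := Group (Scal_group_set k n).

Lemma Scal_norm (k : finFieldType) (n : nat) (x : GLk k n) : x \in 'N(Scal k n).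
Proof.
have : [set: GLk k n] \subset 'N(Scal k n).
  apply: cents_norm; rewrite centsC; apply/centsP => s /ScalP [a sa] y _.
  apply: val_inj; change (GLval (s * y) = GLval (y * s)).
  by rewrite !GL_MxE sa scalar_mxC.
by move/subsetP; apply; rewrite inE.
Qed.

Lemma coset_ScalE (k : finFieldType) (n : nat) (x y : GLk k n) :
  coset (Scal k n) x = coset (Scal k n) y <-> x * y^-1 \in Scal k n.
Proof.
rewrite -mem_rcoset; split.
  by move/(rcoset_kercosetP (Scal_norm x) (Scal_norm y)).
by move/(rcoset_kercosetP (Scal_norm x) (Scal_norm y)).
Qed.

Section RhoFacts.
Variables (pi : groupType) (k : finFieldType) (n : nat) (rho : pi -> GLk k n).
Hypothesis rho_hom : {morph rho : x y / (x * y)%g}.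

Lemma rho1 : rho 1 = 1.
Proof. by apply: (mulgI (rho 1)); rewrite -rho_hom !mulg1. Qed.

Lemma rhoV p : rho p^-1 = (rho p)^-1.
Proof. by apply: (mulIg (rho p)); rewrite -rho_hom !mulVg rho1. Qed.

Lemma rhoR p q : rho (p^-1 * (q^-1 * (p * q))) = [~ rho p, rho q].
Proof. by rewrite !rho_hom !rhoV. Qed.

Definition Img (Q : pi -> Prop) : {set GLk k n} :=
  [set g | `[< exists p, Q p /\ rho p = g >]].

Lemma ImgP (Q : pi -> Prop) g : reflect (exists p, Q p /\ rho p = g) (g \in Img Q).
Proof. by rewrite inE; apply: asboolP. Qed.

Lemma Img_group_set (Q : pi -> Prop) :
  Q 1 -> (forall p q, Q p -> Q q -> Q (p * q)) -> group_set (Img Q).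
Proof.
move=> Q1 QM; apply/group_setP; split.
  by apply/ImgP; exists 1; rewrite rho1.
move=> x y /ImgP [p [Qp <-]] /ImgP [q [Qq <-]]; apply/ImgP.
by exists (p * q); rewrite rho_hom; split=> //; apply: QM.
Qed.

Lemma Img_comm (G : {group GLk k n}) (Q1 Q2 Q3 : pi -> Prop) :
  ([~: G, G] = G)%g ->
  Q3 1 -> (forall p q, Q3 p -> Q3 q -> Q3 (p * q)) ->
  (forall p q, Q1 p -> Q2 q -> Q3 (p^-1 * (q^-1 * (p * q)))) ->
  G \subset Img Q1 -> G \subset Img Q2 -> G \subset Img Q3.
Proof.
move=> perf Q31 Q3M H12 s1 s2.
have gs := Img_group_set Q31 Q3M.
rewrite -perf /commutator.
have -> : Img Q3 = Group gs by [].
rewrite gen_subG; apply/subsetP => c /imset2P [a b Ga Gb ->].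
case/ImgP: (subsetP s1 a Ga) => p [Qp <-].
case/ImgP: (subsetP s2 b Gb) => q [Qq <-].
by apply/ImgP; exists (p^-1 * (q^-1 * (p * q))); rewrite rhoR; split=> //; apply: H12.
Qed.

Lemma Img_norm (G : {group GLk k n}) (Q : pi -> Prop) :
  (forall p q, Q p -> Q (q^-1 * (p * q))) ->
  (forall g, g \in G -> exists q, rho q = g) ->
  G \subset 'N(Img Q).
Proof.
move=> QJ Gex; apply/subsetP => g Gg; rewrite inE.
apply/subsetP => y; rewrite mem_conjg => /ImgP [p [Qp Hp]].
case: (Gex g Gg) => q Hq.
apply/ImgP; exists (q^-1 * (p * q)); split; first exact: QJ.
by rewrite !rho_hom rhoV Hq Hp -conjgE conjgKV.
Qed.

End RhoFacts.

Lemma scal_of (k : finFieldType) (n : nat) (x h : GLk k n) :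
  coset (Scal k n) x = coset (Scal k n) h -> exists c, GLval x = (c *: GLval h)%R.
Proof.
move/coset_ScalE/ScalP => [c Hc]; exists c.
by rewrite -(mulgVK h x) GL_MxE Hc mul_scalar_mx.
Qed.

Lemma mk_chi (pi : groupType) (k : finFieldType) (n : nat) (rho : pi -> GLk k n)
  (rho_hom : {morph rho : x y / (x * y)%g}) (Phi : pi -> 'M[k]_(n.+1)) :
  (forall p q, Phi (p * q) = Phi p *m Phi q) -> Phi 1 = 1%:M ->
  (forall p, exists c, GLval (rho p) = (c *: Phi p)%R) ->
  exists chi, one_dim_rep chi /\ forall p, GLval (rho p) = (chi p *: Phi p)%R.
Proof.
move=> PhiM Phi1 Hc.
have Pu : forall p, Phi p \in unitmx.
  move=> p; have : Phi p *m Phi p^-1 = 1%:M by rewrite -PhiM mulgV Phi1.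
  by case/mulmx1_unit.
pose chi p := (GLval (rho p) *m invmx (Phi p)) ord0 ord0.
have chiE : forall p c, GLval (rho p) = (c *: Phi p)%R -> chi p = c.
  move=> p c E; rewrite /chi E -scalemxAl mulmxV // scalemx1 mxE eqxx; exact: mulr1n.
exists chi; split; last by move=> p; case: (Hc p) => c E; rewrite (chiE p c E).
split.
  apply: chiE; rewrite rho1 // Phi1 scalemx1 //.
move=> p q; apply: (chiE).
case: (Hc p) => a Ea; case: (Hc q) => b Eb.
rewrite rho_hom GL_MxE (chiE p a Ea) (chiE q b Eb) Ea Eb PhiM.
by rewrite -scalemxAl -scalemxAr scalerA.
Qed.

Section Main.
Variables (pi : groupType) (k : finFieldType) (N : nat) (n : 'I_N -> nat)
  (rho : forall i : 'I_N, pi -> GLk k (n i))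
  (G : forall i : 'I_N, {group GLk k (n i)}).
Hypotheses (rho_hom : forall i, {morph rho i : x y / (x * y)%g})
  (G_img : forall i, (G i : {set _}) = img_set (rho i))
  (H1 : forall i, quasisimple (G i))
  (H2 : forall i j, i != j ->
          [/\ natural_proj_faithful (G i), natural_proj_faithful (G j)
            & goursat_adapted (G i) (G j)])
  (H3 : forall i j, i != j ->
          forall (chi : pi -> k) (s : {rmorphism k -> k}),
            one_dim_rep chi -> field_aut s ->
            ~ iso_twist (rho i) (rho j) chi s /\
            ~ iso_twist_dual (rho i) (rho j) chi s).

Let rho1i i := rho1 (rho_hom i).
Let rhoVi i := rhoV (rho_hom i).
Let rhoRi i := rhoR (rho_hom i).

Lemma rho_in i p : rho i p \in G i.
Proof. by rewrite G_img inE; apply/asboolP; exists p. Qed.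

Lemma G_ex i g : g \in G i -> exists p, rho i p = g.
Proof. by rewrite G_img inE => /asboolP. Qed.

Lemma Z_normal_Img i j :
  let Q := fun p => rho i p \in 'Z(G i) in
  exists U : {group GLk k (n j)}, (U : {set _}) = Img (rho j) Q /\ U <| G j.
Proof.
move=> Q.
have Q1 : Q 1 by rewrite /Q rho1i.
have QM : forall p q, Q p -> Q q -> Q (p * q).
  by move=> p q Hp Hq; rewrite /Q rho_hom groupM.
exists (Group (Img_group_set (rho_hom j) Q1 QM)); split=> //.
apply/andP; split.
  by apply/subsetP => g /ImgP [p [_ <-]]; apply: rho_in.
apply: (Img_norm (rho_hom j)); last exact: G_ex.
move=> p q Hp; rewrite /Q !rho_hom rhoVi // -conjgE memJ_norm //.
by apply: (subsetP (normal_norm (center_normal (G i)))); apply: rho_in.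
Qed.

Lemma stepA i j : i != j ->
  G j \subset Img (rho j) (fun p => rho i p \in 'Z(G i)).
Proof.
move=> neq.
have [U [UE nU]] := Z_normal_Img i j.
have [U' [U'E nU']] := Z_normal_Img j i.
case: (qs_normal (H1 j) nU) => [sUZ | ]; last by rewrite UE.
exfalso.
have UZ : forall p, rho i p \in 'Z(G i) -> rho j p \in 'Z(G j).
  by move=> p Hp; apply: (subsetP sUZ); rewrite UE; apply/ImgP; exists p.
case: (qs_normal (H1 i) nU') => [sU'Z | sGU'].
  have ZU : forall p, rho j p \in 'Z(G j) -> rho i p \in 'Z(G i).
    by move=> p Hp; apply: (subsetP sU'Z); rewrite U'E; apply/ImgP; exists p.
  have [fi fj ga] := @H2 i j neq.
  have rel : forall p, (rho i p \in Scal k (n i)) <-> (rho j p \in Scal k (n j)).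
    move=> p; move: (UZ p) (ZU p); rewrite fi fj !inE !rho_in /=.
    by move=> A B; split.
  have W : forall p q, coset (Scal k (n i)) (rho i p) = coset (Scal k (n i)) (rho i q)
      <-> coset (Scal k (n j)) (rho j p) = coset (Scal k (n j)) (rho j q).
    move=> p q; rewrite !coset_ScalE -!rhoVi // -!rho_hom; exact: rel.
  pose pk (c : coset_of (Scal k (n i))) : pi :=
    match pselect (exists p, coset (Scal k (n i)) (rho i p) = c) with
    | left h => projT1 (cid h) | right _ => 1 end.
  have pkP : forall p, coset (Scal k (n i)) (rho i (pk (coset (Scal k (n i)) (rho i p))))
                       = coset (Scal k (n i)) (rho i p).
    move=> p; rewrite /pk; case: pselect => [h|[]]; last by exists p.
    exact: (projT2 (cid h)).
  pose f (c : coset_of (Scal k (n i))) := coset (Scal k (n j)) (rho j (pk c)).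
  have fE : forall p, f (coset (Scal k (n i)) (rho i p)) = coset (Scal k (n j)) (rho j p).
    by move=> p; apply/W; apply: pkP.
  have inq : forall c, c \in (G i / Scal k (n i))%g -> exists p, c = coset (Scal k (n i)) (rho i p).
    move=> c /morphimP [x _ Gx ->]; have [p <-] := G_ex Gx; by exists p.
  have fM : {in (G i / Scal k (n i))%g &, {morph f : x y / x * y}}.
    move=> c d /inq [p ->] /inq [q ->].
    rewrite -(coset_morphM (Scal_norm (rho i p)) (Scal_norm (rho i q))) -rho_hom !fE.
    by rewrite rho_hom; apply: coset_morphM; apply: Scal_norm.
  pose fm : {morphism (G i / Scal k (n i))%g >-> coset_of (Scal k (n j))} := Morphism fM.
  have iso : isom (G i / Scal k (n i))%g (G j / Scal k (n j))%g fm.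
    apply/isomP; split.
      apply/injmP => c d /inq [p ->] /inq [q ->] /=; rewrite !fE; by move/W.
    apply/eqP; rewrite eqEsubset; apply/andP; split; apply/subsetP => c.
      case/morphimP => d _ /inq [p ->] ->; rewrite /= fE.
      by apply: mem_quotient; apply: rho_in.
    case/morphimP => x _ Gx ->; have [q <-] := G_ex Gx.
    apply/morphimP; exists (coset (Scal k (n i)) (rho i q)); rewrite /= ?fE //;
      by apply: mem_quotient; apply: rho_in.
  have ji : j != i by rewrite eq_sym.
  have invs : forall (s : {rmorphism k -> k}) (g : GLk k (n i)),
      invmx (map_mx s (GLval g)) = map_mx s (GLval g^-1).
    by move=> s g; rewrite GL_VxE map_invmx.
  have G1 : GLval (1 : GLk k (n i)) = 1%:M by [].
  case: (ga fm iso) => s [sa [A [B [[AB BA] Hc]]]].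
  case: Hc => Hc.
    pose Phi p := B *m map_mx s (GLval (rho i p)) *m A.
    have PhiM : forall p q, Phi (p * q) = Phi p *m Phi q.
      move=> p q; rewrite /Phi rho_hom GL_MxE map_mxM !mulmxA.
      by rewrite -(mulmxA (B *m _) A B) AB mulmx1.
    have Phi1 : Phi 1 = 1%:M by rewrite /Phi rho1i G1 map_mx1 mulmx1 BA.
    have Hc' : forall p, exists c, GLval (rho j p) = (c *: Phi p)%R.
      move=> p; case: (Hc (rho i p) (rho_in i p)) => h [Hh Hf].
      rewrite /Phi -Hh; apply: scal_of; move: Hf; rewrite /= fE => ->; by [].
    case: (mk_chi (rho_hom j) PhiM Phi1 Hc') => chi [chi1 Hchi].
    apply: (proj1 (@H3 j i ji chi s chi1 sa)).
    by exists A, B; split.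
  pose Phi p := B *m (invmx (map_mx s (GLval (rho i p))))^T *m A.
  have PhiM : forall p q, Phi (p * q) = Phi p *m Phi q.
    move=> p q; rewrite /Phi !invs rho_hom invMg GL_MxE map_mxM trmx_mul !mulmxA.
    by rewrite -(mulmxA (B *m _) A B) AB mulmx1.
  have Phi1 : Phi 1 = 1%:M by rewrite /Phi invs rho1i invg1 G1 map_mx1 trmx1 mulmx1 BA.
  have Hc' : forall p, exists c, GLval (rho j p) = (c *: Phi p)%R.
    move=> p; case: (Hc (rho i p) (rho_in i p)) => h [Hh Hf].
    rewrite /Phi -Hh; apply: scal_of; move: Hf; rewrite /= fE => ->; by [].
  case: (mk_chi (rho_hom j) PhiM Phi1 Hc') => chi [chi1 Hchi].
  apply: (proj2 (@H3 j i ji chi s chi1 sa)).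
  by exists A, B; split.
have sGZ : G j \subset 'Z(G j).
  apply/subsetP => h Gh; have [q <-] := G_ex Gh.
  have : rho i q \in U' by apply: (subsetP sGU'); apply: rho_in.
  rewrite U'E => /ImgP [p [Zp Ep]].
  have : rho j (q * p^-1) \in 'Z(G j).
    by apply: UZ; rewrite rho_hom rhoVi Ep mulgV group1.
  by rewrite rho_hom rhoVi => H; rewrite -(mulgVK (rho j p) (rho j q)) groupM.
case/simpleP: (H1 j).2 => ntG _.
by case/negP: ntG; apply/eqP; apply: quotientS1.
Qed.

Lemma stepB i j : i != j -> G j \subset Img (rho j) (fun p => rho i p = 1).
Proof.
move=> neq.
apply: (Img_comm (rho_hom j) (H1 j).1 _ _ _ (stepA neq) (stepA neq)).
- exact: rho1i.
- by move=> p q Hp Hq; rewrite rho_hom Hp Hq mulg1.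
move=> p q Hp Hq; rewrite rhoRi; apply/eqP/commgP.
by case/centerP: Hp => _; apply; apply: rho_in.
Qed.

Lemma stepC j (s : seq 'I_N) : j \notin s ->
  G j \subset Img (rho j) (fun p => forall i, i \in s -> rho i p = 1).
Proof.
elim: s => [|a s IH].
  move=> _; apply/subsetP => g Gg; have [p <-] := G_ex Gg.
  by apply/ImgP; exists p; split=> // i; rewrite in_nil.
rewrite in_cons negb_or => /andP [ja js].
have aj : a != j by rewrite eq_sym.
apply: (Img_comm (rho_hom j) (H1 j).1 _ _ _ (IH js) (stepB aj)).
- by move=> i _; apply: rho1i.
- by move=> p q Hp Hq i Hi; rewrite rho_hom Hp ?Hq // mulg1.
move=> p q Hp Hq i; rewrite in_cons rhoRi => /orP [/eqP -> | Hi].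
  by rewrite Hq commg1.
by rewrite Hp // comm1g.
Qed.

Lemma all_tuples (x : forall i : 'I_N, GLk k (n i)) :
  (forall i, x i \in G i) -> exists p : pi, forall i, rho i p = x i.
Proof.
move=> Gx.
have key : forall s : seq 'I_N, exists p, forall i, rho i p = if i \in s then x i else 1.
  elim => [|a s [p Hp]].
    by exists 1 => i; rewrite rho1i in_nil.
  case: (boolP (a \in s)) => as_.
    exists p => i; rewrite in_cons Hp; case: (eqVneq i a) => [-> | _] //=.
    by rewrite as_.
  have ns : a \notin [seq i <- enum 'I_N | i != a] by rewrite mem_filter eqxx.
  case/ImgP: (subsetP (stepC ns) (x a) (Gx a)) => q [Qq Eq].
  exists (p * q) => i; rewrite rho_hom Hp in_cons.
  case: (eqVneq i a) => [-> | ne] /=.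
    by rewrite (negbTE as_) Eq mul1g.
  by rewrite Qq ?mulg1 // mem_filter ne mem_enum.
case: (key (enum 'I_N)) => p Hp; exists p => i.
by rewrite Hp mem_enum.
Qed.

End Main.

Unset Implicit Arguments.
Set Strict Implicit.
Local Close Scope group_scope.
Local Open Scope ring_scope.

Theorem proposition4p11
  (pi : groupType) (k : finFieldType) (F : fieldType) (N : nat)
  (n m : 'I_N -> nat)
  (rho : forall i : 'I_N, pi -> GLk k (n i))
  (G : forall i : 'I_N, {group GLk k (n i)})
  (eta : forall i : 'I_N, mx_representation F (G i) (m i))
  (rho_hom : forall i, {morph rho i : x y / (x * y)%g})
  (G_img : forall i, (G i : {set _}) = img_set (rho i))
  (eta_nontriv : forall i, exists2 x, x \in G i & eta i x != 1%:M)
  (H1 : forall i, quasisimple (G i))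
  (H2 : forall i j, i != j ->
          [/\ natural_proj_faithful (G i), natural_proj_faithful (G j)
            & goursat_adapted (G i) (G j)])
  (H3 : forall i j, i != j ->
          forall (chi : pi -> k) (s : {rmorphism k -> k}),
            one_dim_rep chi -> field_aut s ->
            ~ iso_twist (rho i) (rho j) chi s /\
            ~ iso_twist_dual (rho i) (rho j) chi s) :
  forall x : forall i : 'I_N, GLk k (n i),
    (forall i, x i \in G i) ->
    exists p : pi, forall i, eta i (rho i p) = eta i (x i).
Proof.
move=> x Gx.
have [p Hp] := all_tuples rho_hom G_img H1 H2 H3 Gx.
by exists p => i; rewrite Hp.
Qed.
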